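(* Let $k_{cl}(n)$ be the largest $k$ such that Maker has a winning strategy in the $k$-clique game on $K_n$. Let $TT_k$ be the transitive tournament on $\{u_1,\dots,u_k\}$, with $u_i\to u_j$ for all $i<j$. Then Maker has a winning strategy in the $k$-tournament game $\mathcal{T}(k,n)$ in which the fixed tournament is $TT_k$, for $k=k_{cl}(n)$.
   Context: In the $k$-clique game on $K_n$, Maker (moving first) and Breaker alternately claim one unclaimed edge of $K_n$; Maker wins if her graph contains a clique on $k$ vertices. In the $k$-tournament game, each player additionally chooses an orientation for each claimed edge, and Maker wins if her digraph contains a copy of the fixed tournament. *)

(* Defs.v *)
From mathcomp Require Import all_boot.
Set Implicit Arguments. Unset Strict Implicit. Unset Printing Implicit Defensive.

Section Game.
Variable n : nat.
Notation V := 'I_n.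

(* Moves are drawn from a finite type Mv;
   each move m claims the (unordered) edge [ed m] of K_n (a 2-subset of the
   vertex set), possibly with extra data (e.g. an orientation).  A position is
   the pair (M, B) of moves made so far by Maker and Breaker; Maker is to move. *)
Variable Mv : finType.
Variable ed : Mv -> {set V}.
Variable W : {set Mv} -> Prop.  (* Maker's winning condition on her moves *)

Definition claimed (M B : {set Mv}) : {set {set V}} := [set ed x | x in M :|: B].

Definition legal (M B : {set Mv}) (m : Mv) : bool :=
  (#|ed m| == 2) && (ed m \notin claimed M B).

(* Maker (to move) has a winning strategy from position (M, B): either she
   has already won, or she has a legal move after which she has won, or after
   which the board is not exhausted and, whatever legal move Breaker answers,
   she again has a winning strategy.  (If the board is exhausted and Maker
   has not won, Maker loses.) *)
Inductive maker_wins : {set Mv} -> {set Mv} -> Prop :=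
| mw_won M B : W M -> maker_wins M B
| mw_move M B m : legal M B m ->
    (W (m |: M) \/
     ((exists b, legal (m |: M) B b) /\
      (forall b, legal (m |: M) B b -> maker_wins (m |: M) (b |: B)))) ->
    maker_wins M B.
End Game.

Definition has_clique n (k : nat) (M : {set {set 'I_n}}) : Prop :=
  exists S : {set 'I_n}, #|S| = k /\
    (forall x y, x \in S -> y \in S -> x != y -> [set x; y] \in M).

Definition clique_game_maker_wins (n k : nat) : Prop :=
  maker_wins (fun e : {set 'I_n} => e) (@has_clique n k) set0 set0.

(* ---- k-tournament game on K_n for the transitive tournament TT_k:
   moves are arcs (i, j), claiming edge {i, j} with orientation i -> j. ---- *)
Definition arc_edge n (a : 'I_n * 'I_n) : {set 'I_n} := [set a.1; a.2].

(* TT_k on vertices u_0,...,u_{k-1} with u_i -> u_j for i < j.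
   Maker's digraph contains a copy of TT_k. *)
Definition has_TT n (k : nat) (M : {set 'I_n * 'I_n}) : Prop :=
  exists f : 'I_k -> 'I_n, injective f /\
    (forall i j : 'I_k, (i < j)%N -> (f i, f j) \in M).

Definition TT_game_maker_wins (n k : nat) : Prop :=
  maker_wins (@arc_edge n) (@has_TT n k) set0 set0.

(* Main.v *)
Require Import Defs.
From mathcomp Require Import all_boot.
From mathcomp Require Import zify.
Set Implicit Arguments. Unset Strict Implicit. Unset Printing Implicit Defensive.

Section Aux.
Variable n : nat.

Definition up (M' : {set 'I_n * 'I_n}) := forall a, a \in M' -> (a.1 < a.2)%N.

Lemma edge2 (m : {set 'I_n}) : #|m| = 2 -> exists x y : 'I_n, (x < y)%N /\ m = [set x; y].
Proof.
move/eqP/cards2P => [x [y [nxy ->]]].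
case: (ltngtP x y) => h.
- by exists x, y.
- by exists y, x; rewrite setUC.
- by move: nxy; rewrite (val_inj h) eqxx.
Qed.

Lemma W_transfer k (M' : {set 'I_n * 'I_n}) :
  up M' -> has_clique k (@arc_edge n @: M') -> has_TT k M'.
Proof.
move=> hup [S [hS hcl]].
have kn : k <= n by rewrite -hS; have := max_card (mem S); rewrite card_ord.
pose s := sort (fun x y : 'I_n => (x <= y)%N) (enum S).
pose t := map val s.
have hsz : size s = k by rewrite size_sort -cardE.
have hts : sorted ltn t.
  rewrite ltn_sorted_uniq_leq; apply/andP; split.
    by rewrite map_inj_uniq ?sort_uniq ?enum_uniq //; apply: val_inj.
  rewrite sorted_map; apply: sort_sorted => x y /=; exact: leq_total.
pose f := fun i : 'I_k => nth (Ordinal (leq_trans (ltn_ord i) kn)) s i.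
have fmon : forall i j : 'I_k, (i < j)%N -> (f i < f j)%N.
  move=> i j hij.
  have hi : i < size s by rewrite hsz.
  have hj : j < size s by rewrite hsz.
  have := sorted_ltn_nth ltn_trans 0 hts.
  move=> /(_ i j); rewrite !inE !size_map => /(_ hi hj hij).
  rewrite !(nth_map (Ordinal (leq_trans (ltn_ord i) kn))) //.
  by rewrite /f (set_nth_default (Ordinal (leq_trans (ltn_ord i) kn)) _ hj).
have fS : forall i, f i \in S.
  move=> i; have : f i \in s by apply: mem_nth; rewrite hsz.
  by rewrite mem_sort mem_enum.
exists f; split.
  move=> i j hij; case: (ltngtP i j) => h; last exact: val_inj.
  - by have := fmon _ _ h; rewrite hij ltnn.
  - by have := fmon _ _ h; rewrite hij ltnn.
move=> i j hij.
have hfij := fmon _ _ hij.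
have hne : f i != f j by apply/eqP => e; move: hfij; rewrite e ltnn.
have := hcl _ _ (fS i) (fS j) hne.
case/imsetP => a ha hae.
have a1 : a.1 \in [set f i; f j] by rewrite hae /arc_edge !inE eqxx.
have a2 : a.2 \in [set f i; f j] by rewrite hae /arc_edge !inE eqxx orbT.
have lt := hup _ ha.
move: a1 a2; rewrite !inE => /orP[] /eqP e1 /orP[] /eqP e2.
- by move: lt; rewrite e1 e2 ltnn.
- by rewrite -e1 -e2 -surjective_pairing.
- by move: lt hfij; rewrite e1 e2; lia.
- by move: lt; rewrite e1 e2 ltnn.
Qed.

Lemma claimed_eq (M' B' : {set 'I_n * 'I_n}) :
  claimed (@arc_edge n) M' B' = claimed (fun e : {set 'I_n} => e) (@arc_edge n @: M') (@arc_edge n @: B').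
Proof.
rewrite /claimed imsetU imset_id; apply/setP => e.
by rewrite !inE.
Qed.

Lemma transfer k : forall (M B : {set {set 'I_n}}),
  maker_wins (fun e => e) (@has_clique n k) M B ->
  forall M' B' : {set 'I_n * 'I_n}, up M' -> M = @arc_edge n @: M' -> B = @arc_edge n @: B' ->
  maker_wins (@arc_edge n) (@has_TT n k) M' B'.
Proof.
fix IH 3.
move=> M B H M' B' hup hM hB.
destruct H as [M B hW | M B m hl hrest].
  by apply: mw_won; apply: W_transfer => //; rewrite -hM.
move: hl; rewrite /legal => /andP[/eqP hm2 hmc].
have [x [y [hxy hmxy]]] := edge2 hm2.
have hup' : up ((x, y) |: M').
  by move=> a; rewrite !inE => /orP[/eqP -> //|]; apply: hup.
have hM' : m |: M = @arc_edge n @: ((x, y) |: M') by rewrite imsetU1 hM hmxy.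
apply: (@mw_move _ _ _ _ _ _ (x, y)).
  rewrite /legal claimed_eq -hM -hB /arc_edge /= -hmxy hm2 eqxx /=.
  by move: hmc; rewrite /claimed imset_id.
case: hrest => [hw|[[b hb] hall]].
  by left; apply: W_transfer => //; rewrite -hM'.
right; split.
  move: hb; rewrite /legal => /andP[/eqP hb2 hbc].
  have [x' [y' [_ hbxy]]] := edge2 hb2.
  exists (x', y'); rewrite /legal claimed_eq -hM' -hB /arc_edge /= -hbxy hb2 eqxx /=.
  by move: hbc; rewrite /claimed imset_id.
move=> b' hb'.
apply: (IH _ _ (hall (arc_edge b') _)) => //.
  move: hb'; rewrite /legal claimed_eq -hM' -hB.
  by rewrite /claimed imset_id.
by rewrite imsetU1 hB.
Qed.

End Aux.

Theorem mainTheorem9 (n k : nat) :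
  clique_game_maker_wins n k ->
  (forall k' : nat, clique_game_maker_wins n k' -> k' <= k) ->
  TT_game_maker_wins n k.
Proof.
move=> h _; apply: (transfer h) => //.
- by move=> a; rewrite inE.
- by rewrite imset0.
- by rewrite imset0.
Qed.
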